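(* For any $E_1,E_2\in\mathfrak g$ there exist polynomials $\tilde\alpha_k(x_1,x_2)\in\mathbb C[x_1,x_2]$, $k=0,\dots,(\dim\mathfrak g)^2$, not all zero, such that $$\sum_{k=0}^{(\dim\mathfrak g)^2}\tilde\alpha_k(x_1,x_2)\frac{\partial^k}{\partial x_1^k}W_2(x_1.E_1,x_2.E_2)=0$$ for all $x_1\neq x_2$ in $U$.
   Context: Let $G\subset GL(r,\mathbb C)$ be a complex reductive Lie group given in a faithful matrix representation, with Lie algebra $\mathfrak g\subset\mathfrak{gl}(r,\mathbb C)$; ${\rm Tr}$ denotes the matrix trace. Let $\mathcal D(x)$ be an $r\times r$ matrix with rational entries in $x$, $\mathcal D(x)\in\mathfrak g$. Let $\Psi(x)$ be a holomorphic $G$-valued solution of $\frac{d}{dx}\Psi=\mathcal D\Psi$ on a simply connected domain $U\subset\mathbb C$ avoiding the poles of $\mathcal D$. For $x\in U$, $E\in\mathfrak g$, write $x.E$ for the pair and $M(x.E)=\Psi(x)E\Psi(x)^{-1}$. For $X_i=x_i.E_i$ with $x_1\ne x_2$ define $W_2(X_1,X_2)=\frac{1}{(x_1-x_2)^2}{\rm Tr}\,M(X_1)M(X_2)$. *)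

(* Defs.v *)
From HB Require Import structures.
From mathcomp Require Import all_boot all_order all_algebra.
From mathcomp Require Import complex.
From mathcomp Require Import all_classical all_reals all_analysis.
Set Implicit Arguments. Unset Strict Implicit. Unset Printing Implicit Defensive.
Import Order.TTheory GRing.Theory Num.Theory numFieldNormedType.Exports.
Local Open Scope ring_scope.
Local Open Scope classical_set_scope.

(* The complex numbers, as R[i] for a real field R : realType, viewed as a
   normed module over itself (the "regular" copy ^o carries the normed
   structure needed by MathComp-Analysis' derivative). *)
Definition cplx (R : realType) := (R[i])^o.

Section Defs.
Variable R : realType.
Local Notation C := (cplx R).
Variable r : nat.

Definition unit_interval : set R := [set t | 0 <= t <= 1].

Definition domain (U : set C) : Prop := U !=set0 /\ open U /\ connected U.

Definition simply_connected (U : set C) : Prop :=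
  connected U /\
  forall gam : R -> C,
    {within unit_interval, continuous gam} -> gam 0 = gam 1 ->
    gam @` unit_interval `<=` U ->
    exists H : R * R -> C,
      {within unit_interval `*` unit_interval, continuous H} /\
      (forall s, unit_interval s -> H (s, 0) = gam s /\ H (s, 1) = gam 0) /\
      (forall t, unit_interval t -> H (0, t) = gam 0 /\ H (1, t) = gam 0) /\
      H @` (unit_interval `*` unit_interval) `<=` U.

Definition matrix_group (G : set 'M[C]_r) : Prop :=
  [/\ G 1%:M,
      (forall A, G A -> A \in unitmx),
      (forall A B, G A -> G B -> G (A *m B)) &
      (forall A, G A -> G (invmx A))].

(* G is closed in GL(r, C) (hence, by Cartan, a Lie subgroup). *)
Definition closed_in_GL (G : set 'M[C]_r) : Prop :=
  forall A, A \in unitmx -> closure G A -> G A.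

Definition lie_algebra_of (G : set 'M[C]_r) (g : {vspace 'M[C]_r}) : Prop :=
  forall X : 'M[C]_r,
    X \in g <->
    exists gam : C -> 'M[C]_r,
      [/\ gam 0 = 1%:M, (\forall t \near (0 : C), G (gam t)),
          derivable gam 0 1 & derive1 gam 0 = X].

(* Reductivity, expressed as complete reducibility of the defining
   representation: every G-invariant subspace of C^r has a G-invariant
   complement. *)
Definition invariant_subspace (G : set 'M[C]_r) (W : {vspace 'cV[C]_r}) :=
  forall A v, G A -> v \in W -> A *m v \in W.

Definition reductive_rep (G : set 'M[C]_r) : Prop :=
  forall W, invariant_subspace G W ->
    exists W', [/\ invariant_subspace G W', (W + W')%VS = fullv
                 & (W :&: W')%VS = 0%VS].

(* D is an r x r matrix of rational functions: entry (i,j) is P i j / Q i j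
   in lowest terms; x is a pole of D iff some Q i j vanishes at x. *)
Definition pole_free (Q : 'M[{poly C}]_r) (x : C) : Prop :=
  forall i j, (Q i j).[x] != 0.

Definition rational_matrix_fun (D : C -> 'M[C]_r) (P Q : 'M[{poly C}]_r) :=
  (forall i j, Q i j != 0 /\ coprimep (P i j) (Q i j)) /\
  (forall x, pole_free Q x -> forall i j, D x i j = (P i j).[x] / (Q i j).[x]).

Definition Mop (Psi : C -> 'M[C]_r) (x : C) (E : 'M[C]_r) : 'M[C]_r :=
  Psi x *m E *m invmx (Psi x).

Definition W2 (Psi : C -> 'M[C]_r) (x1 : C) (E1 : 'M[C]_r)
  (x2 : C) (E2 : 'M[C]_r) : C :=
  \tr (Mop Psi x1 E1 *m Mop Psi x2 E2) / (x1 - x2) ^+ 2.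

End Defs.

(* Bivariate polynomials C[x1,x2] encoded as C[x2][x1]: evaluation. *)
Definition peval2 (R : realType) (p : {poly {poly cplx R}}) (x1 x2 : cplx R)
  : cplx R := (map_poly (fun q : {poly cplx R} => q.[x2]) p).[x1].

(* Main.v *)
Require Import Defs.
From HB Require Import structures.
From mathcomp Require Import all_boot all_order all_algebra.
From mathcomp Require Import complex.
From mathcomp Require Import all_classical all_reals all_analysis.
From mathcomp Require Import ring.
From mathcomp Require Import generic_quotient fraction.
Set Implicit Arguments. Unset Strict Implicit. Unset Printing Implicit Defensive.
Import Order.TTheory GRing.Theory Num.Theory numFieldNormedType.Exports.
Local Open Scope ring_scope.
Local Open Scope classical_set_scope.
Section pointwise.
Context {R : numFieldType} {V : normedModType R} {m n : nat}.
Implicit Types M : V -> 'M[R]_(m, n).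

Lemma mx_cvgP {T : Type} (F : set_system T) {FF : Filter F}
  (f : T -> 'M[R]_(m, n)) (l : 'M[R]_(m, n)) :
  f @ F --> l <-> forall i j, (fun x => f x i j) @ F --> l i j.
Proof.
split.
- move=> /cvg_ballP fl i j; apply/cvg_ballP => e e0.
  by apply: filter_app (fl e e0); near=> x => -[_ /(_ i j)].
- move=> fl; apply/cvg_ballP => e e0.
  have H : forall ij : 'I_m * 'I_n, \forall x \near F, ball (l ij.1 ij.2) e (f x ij.1 ij.2).
    by move=> ij; exact: (cvg_ballP _ _).1 (fl ij.1 ij.2) e e0.
  apply: filter_app (filter_forall _ H); near=> x => Hx.
  by split => // i j; exact: (Hx (i, j)).
Unshelve. all: by end_near. Qed.

Lemma derivable_mxP' M t v :
  derivable M t v <-> forall i j, derivable (fun x => M x i j) t v.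
Proof.
rewrite /derivable; split.
- move=> /cvg_ex[/= l] /mx_cvgP Hl i j; apply/cvg_ex; exists (l i j).
  move: (Hl i j); apply: cvg_trans; apply: near_eq_cvg; near=> h.
  by rewrite /= !mxE.
- move=> Hij; apply/cvg_ex.
  exists (\matrix_(i < m, j < n) 'D_v (fun x => M x i j) t).
  apply/mx_cvgP => i j; rewrite mxE.
  have := Hij i j; rewrite /= => /cvg_ex[/= l Hl].
  rewrite /derive (cvg_lim _ Hl) //.
  move: Hl; apply: cvg_trans; apply: near_eq_cvg; near=> h.
  by rewrite /= !mxE.
Unshelve. all: by end_near. Qed.

Lemma derive_mx' (M : V -> 'M[R]_(m, n)) t v :
  derivable M t v ->
  'D_v M t = \matrix_(i < m, j < n) 'D_v (fun t => M t i j) t.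
Proof.
move=> dM; have := dM; rewrite derivable_mxP' => dij.
apply/cvg_lim => //; apply/mx_cvgP => i j; rewrite mxE.
have := dij i j; rewrite /derivable => /cvg_ex[/= l Hl].
rewrite /derive (cvg_lim _ Hl) //.
move: Hl; apply: cvg_trans; apply: near_eq_cvg; near=> h.
by rewrite /= !mxE.
Unshelve. all: by end_near. Qed.
End pointwise.

Section horner'.
Variable (R : numFieldType).
Let horner0_ext : horner (0 : {poly R}) = 0.
Proof. by apply/funext => y /=; rewrite horner0. Qed.
Let hornerD_ext (p : {poly R}) r :
  horner (p * 'X + r%:P) = horner (p * 'X) + horner (r%:P).
Proof. by apply/funext => y /=; rewrite !(hornerE,fctE). Qed.
Let horner_scale_ext (p : {poly R}) :
  horner (p * 'X) = (fun x => p.[x] * x)%R.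
Proof. by apply/funext => y; rewrite !hornerE. Qed.
Let hornerC_ext (r : R) : horner r%:P = cst r.
Proof. by apply/funext => y /=; rewrite !hornerE. Qed.

Lemma derivable_horner' (p : {poly R}) x : derivable (horner p) x 1.
Proof.
elim/poly_ind: p => [|p r ih]; first by rewrite horner0_ext.
rewrite hornerD_ext; apply: derivableD.
- rewrite horner_scale_ext/=.
  by apply: derivableM; [exact:ih|exact:derivable_id].
- by rewrite hornerC_ext; exact: derivable_cst.
Qed.

Lemma derivE' (p : {poly R}) : horner (p^`()) = (horner p)^`()%classic.
Proof.
apply/funext => x; elim/poly_ind: p => [|p r ih].
  by rewrite deriv0 hornerC horner0_ext derive1_cst.
rewrite derivD hornerD hornerD_ext.
rewrite derive1E deriveD//; [|exact: derivable_horner'..].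
rewrite -!derive1E hornerC_ext derive1_cst addr0.
rewrite horner_scale_ext derive1E deriveM//; last exact: derivable_horner'.
rewrite derive_id -derive1E -ih derivC horner0 addr0 derivM hornerD !hornerE.
by rewrite derivX hornerE mulr1 addrC mulrC scaler1.
Qed.

Lemma is_derive_poly' (p : {poly R}) (x : R) :
  is_derive x (1:R) (horner p) p^`().[x].
Proof.
by apply: DeriveDef; [exact: derivable_horner'|rewrite derivE' derive1E].
Qed.
End horner'.
Section mxder.
Variable K : numFieldType.

Definition mxder {m n} (F : K -> 'M[K]_(m, n)) (t : K) (F' : 'M[K]_(m, n)) :=
  forall i j, is_derive t (1:K) (fun x => F x i j) (F' i j).

Lemma mxder_derivable m n (F : K -> 'M[K]_(m, n)) t :
  derivable F t 1 -> mxder F t (derive1 F t).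
Proof.
move=> dF; have := dF; rewrite derivable_mxP' => dij i j.
rewrite derive1E derive_mx' // mxE.
exact: derivableP.
Qed.

Lemma mxder_to m n (F : K -> 'M[K]_(m, n)) t F' :
  mxder F t F' -> derivable F t 1 /\ derive1 F t = F'.
Proof.
move=> dF.
have dd : derivable F t 1 by apply/derivable_mxP' => i j; exact: (dF i j).(ex_derive).
split => //; rewrite derive1E derive_mx' //; apply/matrixP => i j; rewrite mxE.
exact: (dF i j).(derive_val).
Qed.

Lemma mxder_cst m n (A : 'M[K]_(m, n)) t : mxder (fun _ => A) t 0.
Proof. move=> i j; rewrite mxE; exact: is_derive_cst. Qed.

Lemma mxder_add m n (F H : K -> 'M[K]_(m, n)) t F' H' :
  mxder F t F' -> mxder H t H' -> mxder (fun x => F x + H x) t (F' + H').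
Proof.
move=> dF dH i j; rewrite mxE.
have -> : (fun x => (F x + H x) i j) = (fun x => F x i j) + (fun x => H x i j).
  by apply/funext => x; rewrite mxE.
exact: is_deriveD.
Qed.

Lemma mxder_opp m n (F : K -> 'M[K]_(m, n)) t F' :
  mxder F t F' -> mxder (fun x => - F x) t (- F').
Proof.
move=> dF i j; rewrite mxE.
have -> : (fun x => (- F x) i j) = - (fun x => F x i j).
  by apply/funext => x; rewrite mxE.
exact: is_deriveN.
Qed.

Lemma mxder_mul m n p (F : K -> 'M[K]_(m, n)) (H : K -> 'M[K]_(n, p)) t F' H' :
  mxder F t F' -> mxder H t H' ->
  mxder (fun x => F x *m H x) t (F' *m H t + F t *m H').
Proof.
move=> dF dH i j.
have -> : (fun x => (F x *m H x) i j) =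
   \sum_(k < n) (fun x => F x i k * H x k j).
  by apply/funext => x; rewrite mxE fct_sumE.
apply: is_derive_eq.
  apply: is_derive_sum => k.
  exact: is_deriveM.
rewrite !mxE -big_split /=; apply: eq_bigr => k _.
by rewrite /GRing.scale /= addrC mulrC [H t k j * _]mulrC.
Qed.

Lemma mxder_scal m n (f : K -> K) (F : K -> 'M[K]_(m, n)) t df F' :
  is_derive t (1:K) f df -> mxder F t F' ->
  mxder (fun x => f x *: F x) t (df *: F t + f t *: F').
Proof.
move=> df' dF i j.
have -> : (fun x => (f x *: F x) i j) = f * (fun x => F x i j).
  by apply/funext => x; rewrite mxE.
apply: is_derive_eq; first exact: is_deriveM.
by rewrite !mxE /GRing.scale /=; ring.
Qed.

Lemma mxder_lin m n (L : {scalar 'M[K]_(m, n)}) (F : K -> 'M[K]_(m, n)) t F' :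
  mxder F t F' -> is_derive t (1:K) (fun x => L (F x)) (L F').
Proof.
move=> dF.
have E : forall X : 'M[K]_(m, n),
    L X = \sum_(ij : 'I_m * 'I_n) X ij.1 ij.2 * L (delta_mx ij.1 ij.2).
  move=> X; rewrite {1}(matrix_sum_delta X) linear_sum; under eq_bigr do rewrite linear_sum; rewrite pair_bigA /=.
  by apply: eq_bigr => -[i j] _; rewrite linearZ.
have -> : (fun x => L (F x)) =
   \sum_(ij : 'I_m * 'I_n) (fun x => F x ij.1 ij.2 * L (delta_mx ij.1 ij.2)).
  by apply/funext => x; rewrite E fct_sumE.
rewrite E.
elim/big_ind2 : _ => //.
- exact: is_derive_cst.
- by move=> *; exact: is_deriveD.
- move=> [i j] _.
  have -> : (fun x => F x (i, j).1 (i, j).2 * L (delta_mx (i, j).1 (i, j).2))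
     = (fun x => F x i j) * cst (L (delta_mx i j)) by [].
  apply: is_derive_eq; first exact: is_deriveM.
  by rewrite /= scaler0 add0r /GRing.scale /= mulrC.
Qed.

Lemma derivable_bigsum (I : eqType) (r : seq I) (P : pred I) (h : I -> K -> K) t :
  (forall i, derivable (h i) t 1) ->
  derivable (fun x => \sum_(i <- r | P i) h i x) t 1.
Proof.
move=> dh; elim: r => [|a r IH].
  have -> : (fun x => \sum_(i <- [::] | P i) h i x) = cst 0.
    by apply/funext => x; rewrite big_nil.
  exact: derivable_cst.
case Pa: (P a).
  have -> : (fun x => \sum_(i <- a :: r | P i) h i x) =
      h a + (fun x => \sum_(i <- r | P i) h i x).
    by apply/funext => x; rewrite big_cons Pa.
  exact: derivableD.
have -> : (fun x => \sum_(i <- a :: r | P i) h i x) =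
    (fun x => \sum_(i <- r | P i) h i x).
  by apply/funext => x; rewrite big_cons Pa.
exact: IH.
Qed.

Lemma derivable_bigprod (I : eqType) (r : seq I) (P : pred I) (h : I -> K -> K) t :
  (forall i, derivable (h i) t 1) ->
  derivable (fun x => \prod_(i <- r | P i) h i x) t 1.
Proof.
move=> dh; elim: r => [|a r IH].
  have -> : (fun x => \prod_(i <- [::] | P i) h i x) = cst 1.
    by apply/funext => x; rewrite big_nil.
  exact: derivable_cst.
case Pa: (P a).
  have -> : (fun x => \prod_(i <- a :: r | P i) h i x) =
      h a * (fun x => \prod_(i <- r | P i) h i x).
    by apply/funext => x; rewrite big_cons Pa.
  exact: derivableM.
have -> : (fun x => \prod_(i <- a :: r | P i) h i x) =
    (fun x => \prod_(i <- r | P i) h i x).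
  by apply/funext => x; rewrite big_cons Pa.
exact: IH.
Qed.

Lemma derivable_det n (F : K -> 'M[K]_n) t :
  (forall i j, derivable (fun x => F x i j) t 1) ->
  derivable (fun x => \det (F x)) t 1.
Proof.
move=> dF.
rewrite /determinant.
apply: derivable_bigsum => s.
apply: derivableM; first exact: derivable_cst.
by apply: derivable_bigprod => i; exact: dF.
Qed.

End mxder.
Section invder.
Variable K : numFieldType.

Lemma mxder_near m n (F H : K -> 'M[K]_(m, n)) t F' :
  (\forall x \near t, F x = H x) -> mxder F t F' -> mxder H t F'.
Proof.
move=> FH dF i j; apply: near_eq_is_derive (dF i j).
by near=> x; rewrite /= (near FH x).
Unshelve. all: by end_near. Qed.

Lemma mxder_unique m n (F H : K -> 'M[K]_(m, n)) t F' H' :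
  (\forall x \near t, F x = H x) -> mxder F t F' -> mxder H t H' -> F' = H'.
Proof.
move=> FH dF dH; apply/matrixP => i j.
rewrite -(dF i j).(derive_val) -(dH i j).(derive_val).
apply: near_eq_derive; by near=> x; rewrite /= (near FH x).
Unshelve. all: by end_near. Qed.

Lemma mxder_inv n (F : K -> 'M[K]_n) t F' :
  (\forall x \near t, F x \in unitmx) -> mxder F t F' ->
  mxder (fun x => invmx (F x)) t (- (invmx (F t) *m F' *m invmx (F t))).
Proof.
move=> Fu dF.
have Ftu : F t \in unitmx by exact: (nbhs_singleton Fu).
pose Phi x := (\det (F x))^-1 *: \adj (F x).
have dFij : forall i j, derivable (fun x => F x i j) t 1.
  by move=> i j; exact: (dF i j).(ex_derive).
have dPhi : derivable Phi t 1.
  apply/derivable_mxP' => i j.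
  have -> : (fun x => Phi x i j) =
     (fun x => (\det (F x))^-1) * (fun x => (-1) ^+ (j + i) * \det (row' j (col' i (F x)))).
    by apply/funext => x; rewrite /Phi !mxE.
  apply: derivableM.
    apply: derivableV; first by move: Ftu; rewrite unitmxE unitfE.
    exact: derivable_det.
  apply: derivableM; first exact: derivable_cst.
  by apply: derivable_det => a b; rewrite /=; under eq_fun do rewrite !mxE; exact: dFij.
have Phi_inv : \forall x \near t, Phi x = invmx (F x).
  by near=> x; rewrite /Phi /invmx (near Fu x).
have dI := mxder_near Phi_inv (mxder_derivable dPhi).
set Phi' := derive1 Phi t in dI.
have dP := mxder_mul dF dI.
have P1 : \forall x \near t, F x *m invmx (F x) = 1%:M.
  by near=> x; rewrite mulmxV // (near Fu x).
have := mxder_unique P1 dP (mxder_cst 1%:M t) => E.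
suff <- : Phi' = - (invmx (F t) *m F' *m invmx (F t)) by [].
have : invmx (F t) *m (F' *m invmx (F t) + F t *m Phi') = 0 by rewrite E mulmx0.
rewrite mulmxDr mulmxA mulmxA mulVmx // mul1mx => /eqP.
rewrite addrC addr_eq0 => /eqP ->.
by [].
Unshelve. all: by end_near. Qed.

End invder.
Section Dep.
Variable A : idomainType.
Local Open Scope quotient_scope.

Lemma frac_clear (x : {fraction A}) :
  exists d, exists a, d != 0 /\ x * tofrac d = tofrac a.
Proof.
elim/quotW: x => r.
exists ((fraction.frac r).2), ((fraction.frac r).1); split; first exact: denom_ratioP.
rewrite /FracField.tofrac; unlock => /=.
have -> : (\pi_({fraction A}) r * \pi_({fraction A}) (Ratio (fraction.frac r).2 1)) =
   \pi_({fraction A}) (FracField.mulf r (Ratio (fraction.frac r).2 1)) by rewrite FracField.pi_mul.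
apply/eqmodP; rewrite /= FracField.equivfE /FracField.mulf.
rewrite !numden_Ratio ?oner_neq0 ?mulf_neq0 ?oner_neq0 ?denom_ratioP //.
by rewrite mulr1 mulr1 mulrC.
Qed.

Lemma frac_clear_seq (r : seq {fraction A}) :
  exists2 D, D != 0 & forall x, x \in r -> exists a, x * tofrac D = tofrac a.
Proof.
elim: r => [|x r [D D0 HD]]; first by exists 1 => //; exact: oner_neq0.
have [d [a [d0 xd]]] := frac_clear x.
exists (D * d); first by rewrite mulf_neq0.
move=> y; rewrite inE => /orP[/eqP ->|yr].
  by exists (a * D); rewrite tofracM mulrCA xd tofracM mulrC.
have [b yb] := HD y yr; exists (b * d).
by rewrite tofracM mulrA yb tofracM.
Qed.

Lemma dep_idomain (N d : nat) (v : 'I_N -> 'rV[A]_d) : (d < N)%N ->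
  exists c : 'I_N -> A, (exists k, c k != 0) /\ \sum_k c k *: v k = 0.
Proof.
move=> dN.
pose Mx : 'M[{fraction A}]_(N, d) := \matrix_(k, j) tofrac (v k 0 j).
have nrf : ~~ row_free Mx.
  rewrite /row_free; apply/negP => /eqP E.
  by have := rank_leq_col Mx; rewrite E leqNgt dN.
have : kermx Mx != 0 by rewrite kermx_eq0.
have [i /negP Hi | H0] := pickP (fun i => row i (kermx Mx) != 0); last first.
  case/negP; apply/eqP/row_matrixP => i; rewrite row0.
  by move/negbFE/eqP: (H0 i).
move=> _; set u := row i (kermx Mx) in Hi.
have uM : u *m Mx = 0 by rewrite /u -row_mul mulmx_ker row0.
clearbody u.
have [D D0 HD] := frac_clear_seq [seq u 0 k | k <- enum 'I_N].
have Hc : forall k, exists a, u 0 k * tofrac D = tofrac a.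
  by move=> k; apply: HD; apply/mapP; exists k => //; rewrite mem_enum.
have [c Ec] := fin_all_exists Hc.
exists c; split.
  have [k /negP Hk | H0] := pickP (fun k => u 0 k != 0); last first.
    by case: Hi; apply/eqP/rowP => k; rewrite [RHS]mxE; move/negbFE/eqP: (H0 k).
  exists k; rewrite -tofrac_eq0 -Ec mulf_neq0 //; first exact/negP.
  by rewrite tofrac_eq0.
apply/rowP => j; rewrite mxE summxE.
apply/eqP; rewrite -tofrac_eq0 rmorph_sum /=.
have -> : \sum_k tofrac ((c k *: v k) 0 j) = tofrac D * (u *m Mx) 0 j.
  rewrite mxE mulr_sumr; apply: eq_bigr => k _.
  by rewrite !mxE tofracM -Ec mulrCA mulrA.
by rewrite uM mxE mulr0.
Qed.
End Dep.
Lemma lin_expand (K : fieldType) m n (L : 'M[K]_(m, n) -> K) :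
  (forall a X Y, L (a *: X + Y) = a * L X + L Y) ->
  forall X, L X = \sum_(ab : 'I_m * 'I_n) X ab.1 ab.2 * L (delta_mx ab.1 ab.2).
Proof.
move=> HL.
have L0 : L 0 = 0.
  by have := HL (-1) 0 0; rewrite scaler0 addr0 mulN1r addNr.
have LD : forall X Y, L (X + Y) = L X + L Y.
  by move=> X Y; rewrite -[X in L (X + _)]scale1r HL mul1r.
have LZ : forall a X, L (a *: X) = a * L X.
  by move=> a X; rewrite -[a *: X]addr0 HL L0 addr0.
move=> X; rewrite {1}(matrix_sum_delta X) pair_bigA /=.
elim/big_rec2 : _ => [|ab y z _ IH]; first by rewrite L0.
by rewrite LD LZ IH.
Qed.
Lemma alg_step (K : fieldType) (a b c Q U Sp : K) (k : nat) :
  Q != 0 -> U != 0 ->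
  c * (- (U ^+ 2 * (Q * U) ^+ k) ^- 2 *
       (2%:R * U * (Q * U) ^+ k + U ^+ 2 * (Sp * (Q * U) ^+ k.-1 *+ k)))
  + (U ^+ 2 * (Q * U) ^+ k)^-1 * (a + Q^-1 * b)
  = ((Q * U) * a + U * b - (2%:R * Q + k%:R * Sp) * c) / (U ^+ 2 * (Q * U) ^+ k.+1).
Proof.
move=> Q0 U0.
have QU : Q * U != 0 by rewrite mulf_neq0.
case: k => [|k].
  rewrite /= !expr0 !mulr0n !mul0r !addr0 expr1.
  by field; rewrite ?Q0 ?U0.
have Sk : (Q * U) ^+ k != 0 by rewrite expf_neq0.
rewrite /= !exprSr -mulr_natr.
by field; rewrite ?Q0 ?U0 ?Sk.
Qed.

Lemma entry_h1 (K : comPzRingType) (m : nat) (t : 'rV[K]_m) (X Y Z : 'M[K]_m)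
  (v : 'cV[K]_m) (cq : K) :
  ((0 *m X + t *m Y) *m v + t *m X *m (cq *: (Z *m v))) 0 0 =
  (t *m Y *m v) 0 0 + cq * (t *m X *m Z *m v) 0 0.
Proof. by rewrite mul0mx add0r -scalemxAr !mulmxA !mxE. Qed.

Lemma entry_h2 (K : comPzRingType) (m : nat) (t : 'rV[K]_m) (X Y Z : 'M[K]_m)
  (v : 'cV[K]_m) (s u w : K) :
  (t *m (s *: Y + u *: (X *m Z) - w *: X) *m v) 0 0 =
  s * (t *m Y *m v) 0 0 + u * (t *m X *m Z *m v) 0 0 - w * (t *m X *m v) 0 0.
Proof.
rewrite mulmxBr mulmxDr !mulmxBl !mulmxDl -!scalemxAr -!scalemxAl !mulmxA.
by rewrite !mxE.
Qed.
Lemma near_neq (K : numFieldType) (y a : K) : y != a -> \forall x \near y, x != a.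
Proof.
move=> ya; exists `|y - a|; first by rewrite /= normr_gt0 subr_eq0.
move=> x /= Hx; apply/eqP => xa; move: Hx; by rewrite xa /= ltxx.
Qed.

Section Main.
Variable R : realType.
Local Notation C := (cplx R).
Variable r : nat.
Variables (G : set 'M[C]_r) (g : {vspace 'M[C]_r}).
Hypothesis mg : matrix_group G.
Hypothesis lieg : lie_algebra_of G g.

Lemma Ad_in_g (Pm X : 'M[C]_r) : G Pm -> X \in g -> Pm *m X *m invmx Pm \in g.
Proof.
move=> GP Xg.
have [G1 Gu GM GV] := mg.
have Pu := Gu _ GP.
have [gam [g0 gnear gder gX]] := (lieg X).1 Xg.
apply/(lieg _).2.
have dgam := mxder_derivable gder.
have d2 := mxder_mul (mxder_mul (mxder_cst Pm 0) dgam) (mxder_cst (invmx Pm) 0).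
have [d2a d2b] := mxder_to d2.
exists (fun t => Pm *m gam t *m invmx Pm); split.
- by rewrite g0 mulmx1 mulmxV.
- near=> t.
  apply: (GM); last exact: GV.
  by apply: GM => //; exact: (near gnear t).
- exact: d2a.
- by rewrite d2b gX mul0mx add0r mulmx0 addr0.
Unshelve. all: by end_near. Qed.

Variables (P Q : 'M[{poly C}]_r) (D : C -> 'M[C]_r) (U : set C) (Psi : C -> 'M[C]_r).
Hypothesis hrat : rational_matrix_fun D P Q.
Hypothesis hdom : domain U.
Hypothesis hpole : forall x, U x -> pole_free Q x.
Hypothesis hG : forall x, U x -> G (Psi x).
Hypothesis hder : forall x, U x -> derivable Psi x 1 /\ derive1 Psi x = D x *m Psi x.

Lemma U_near y : U y -> \forall x \near y, U x.
Proof. move=> Uy; have [_ [oU _]] := hdom; apply: open_nbhs_nbhs; by split. Qed.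

Lemma M_in_g E y : E \in g -> U y -> Mop Psi y E \in g.
Proof. by move=> Eg Uy; apply: Ad_in_g => //; exact: hG. Qed.

Lemma M_der E y : U y ->
  mxder (fun x => Mop Psi x E) y (D y *m Mop Psi y E - Mop Psi y E *m D y).
Proof.
move=> Uy.
have [G1 Gu GM GV] := mg.
have [d1 d2] := hder Uy.
have dPsi := mxder_derivable d1; rewrite d2 in dPsi.
have Un : \forall x \near y, Psi x \in unitmx.
  by near=> x; apply: Gu; apply: hG; exact: (near (U_near Uy) x).
have dI := mxder_inv Un dPsi.
have dM := mxder_mul (mxder_mul dPsi (mxder_cst E y)) dI.
rewrite /Mop; move: dM; congr mxder.
have Pu : Psi y \in unitmx by apply: Gu; exact: hG.
rewrite mulmx0 addr0 mulmxN !mulmxA; congr (_ - _).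
by rewrite -[X in X = _]mulmxA mulmxV // mulmx1.
Unshelve. all: by end_near. Qed.


Definition qq : {poly C} := \prod_(ab : 'I_r * 'I_r) Q ab.1 ab.2.
Definition Dt : 'M[{poly C}]_r :=
  \matrix_(a, b) (P a b * \prod_(cd : 'I_r * 'I_r | cd != (a, b)) Q cd.1 cd.2).

Lemma qq_neq0 : qq != 0.
Proof. by apply/prodf_neq0 => ab _; have [H _] := hrat; case: (H ab.1 ab.2). Qed.

Lemma qq_eval y : pole_free Q y -> qq.[y] != 0.
Proof. by move=> pf; rewrite horner_prod; apply/prodf_neq0 => ab _; exact: pf. Qed.

Lemma D_rat y : pole_free Q y -> D y = (qq.[y])^-1 *: map_mx (horner^~ y) Dt.
Proof.
move=> pf; have [_ H] := hrat; apply/matrixP => a b; rewrite !mxE (H y pf).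
rewrite /qq (bigD1 (a, b)) //= !hornerM !horner_prod.
have qa := pf a b.
have qo : \prod_(i | i != (a, b)) (Q i.1 i.2).[y] != 0.
  by apply/prodf_neq0 => ab _; exact: pf.
rewrite [X in _ = _ * X]mulrC /GRing.scale /=.
field.
by rewrite qa qo.
Qed.

Local Notation n := (\dim g).
Local Notation bb := (vbasis g).

Definition At : 'M[{poly C}]_n :=
  \matrix_(i, j) \sum_(ab : 'I_r * 'I_r)
     coord bb i (delta_mx ab.1 ab.2 *m bb`_j - bb`_j *m delta_mx ab.1 ab.2) *: Dt ab.1 ab.2.

Lemma coord_brk y (i j : 'I_n) : pole_free Q y ->
  coord bb i (D y *m bb`_j - bb`_j *m D y) = (At i j).[y] / qq.[y].
Proof.
move=> pf.
pose L := fun X : 'M[C]_r => coord bb i (X *m bb`_j - bb`_j *m X).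
have HL : forall a X Y, L (a *: X + Y) = a * L X + L Y.
  move=> a X Y; rewrite /L mulmxDl mulmxDr -scalemxAl -scalemxAr.
  rewrite opprD addrACA -scalerBr linearD linearZ /=. done.
rewrite -/(L (D y)) (lin_expand HL) (D_rat pf) mxE horner_sum mulr_suml.
apply: eq_bigr => ab _; rewrite !mxE hornerZ.
by rewrite /GRing.scale /=; field; exact: qq_eval.
Qed.


Definition vv E (x : C) : 'cV[C]_n := \col_i coord bb i (Mop Psi x E).

Lemma vv_der E y : E \in g -> U y ->
  mxder (vv E) y ((qq.[y])^-1 *: (map_mx (horner^~ y) At *m vv E y)).
Proof.
move=> Eg Uy i j.
have -> : (fun x => vv E x i j) = (fun x => coord bb i (Mop Psi x E)).
  by apply/funext => x; rewrite mxE.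
apply: is_derive_eq; first exact: (mxder_lin _ (M_der E Uy)).
have Mg := M_in_g Eg Uy.
set M := Mop Psi y E in Mg *.
have EM : D y *m M - M *m D y =
    \sum_k coord bb k M *: (D y *m bb`_k - bb`_k *m D y).
  rewrite {1 2}(coord_vbasis Mg) mulmx_sumr mulmx_suml -sumrB.
  by apply: eq_bigr => k _; rewrite -scalemxAr -scalemxAl scalerBr.
rewrite EM linear_sum !mxE mulr_sumr; apply: eq_bigr => k _.
rewrite linearZ /= coord_brk; last exact: hpole.
rewrite !mxE /GRing.scale /=; field; exact/qq_eval/hpole.
Qed.


Local Notation AA := {poly {poly C}}.
Definition ev (x1 x2 : C) : {rmorphism AA -> C} :=
  horner_eval x1 \o map_poly (horner_eval x2).
Lemma evE p x1 x2 : peval2 p x1 x2 = ev x1 x2 p.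
Proof. by []. Qed.

Definition uA : AA := 'X - ('X)%:P.
Lemma ev_u x1 x2 : ev x1 x2 uA = x1 - x2.
Proof. by rewrite /ev /= /uA map_polyXsubC /= /horner_eval hornerXsubC hornerX. Qed.

Lemma ev_C (p : {poly C}) x1 x2 : ev x1 x2 (map_poly polyC p) = p.[x1].
Proof.
rewrite /ev /= -map_poly_comp map_poly_id // => c _ /=.
by rewrite /horner_eval hornerC.
Qed.

Definition qA : AA := map_poly polyC qq.
Definition sA : AA := qA * uA.
Definition AtA : 'M[AA]_n := map_mx (map_poly polyC) At.
Lemma ev_At x1 x2 : map_mx (ev x1 x2) AtA = map_mx (horner^~ x1) At.
Proof. by apply/matrixP => i j; rewrite !mxE ev_C. Qed.

Fixpoint Bk (k : nat) : 'M[AA]_n :=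
  if k is k'.+1 then
    sA *: map_mx deriv (Bk k') + uA *: (Bk k' *m AtA)
      - (2%:R * qA + k'%:R * deriv sA) *: Bk k'
  else 1%:M.

Lemma ev_der p y x2 : is_derive y (1 : C) (fun x => ev x x2 p) (ev y x2 (deriv p)).
Proof.
have -> : (fun x => ev x x2 p) = horner (map_poly (horner_eval x2) p) by [].
apply: is_derive_eq; first exact: is_derive_poly'.
by rewrite deriv_map.
Qed.

Lemma ev_mxder m k (B : 'M[AA]_(m, k)) y x2 :
  mxder (fun x => map_mx (ev x x2) B) y (map_mx (ev y x2) (map_mx deriv B)).
Proof.
move=> i j; rewrite !mxE.
have -> : (fun x => map_mx (ev x x2) B i j) = (fun x => ev x x2 (B i j)).
  by apply/funext => x; rewrite mxE.
exact: ev_der.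
Qed.


Definition tau (N : 'M[C]_r) : 'rV[C]_n := \row_j \tr (bb`_j *m N).
Definition num E N x2 k (y : C) : C :=
  (tau N *m map_mx (ev y x2) (Bk k) *m vv E y) 0 0.
Definition Fk E N x2 k (y : C) : C :=
  num E N x2 k y / ((y - x2) ^+ 2 * (ev y x2 sA) ^+ k).

Lemma ev_s y x2 : ev y x2 sA = qq.[y] * (y - x2).
Proof. by rewrite /sA rmorphM ev_u ev_C. Qed.

Lemma Fk_der E N x2 k y : E \in g -> U y -> y != x2 ->
  is_derive y (1 : C) (Fk E N x2 k) (Fk E N x2 k.+1 y).
Proof.
move=> Eg Uy yx2.
have q0 : qq.[y] != 0 by exact/qq_eval/hpole.
have u0 : y - x2 != 0 by rewrite subr_eq0.
have dvv := vv_der Eg Uy.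
have dB := ev_mxder (Bk k) y x2.
have dNum := mxder_mul (mxder_mul (mxder_cst (tau N) y) dB) dvv.
have dN := dNum 0 0.
pose dd : AA := uA ^+ 2 * sA ^+ k.
have den_eq : forall x, (x - x2) ^+ 2 * (ev x x2 sA) ^+ k = ev x x2 dd.
  by move=> x; rewrite /dd [RHS]rmorphM [in RHS]rmorphXn [in RHS]rmorphXn ev_u.
have dden := ev_der dd y x2.
have den0 : ev y x2 dd != 0.
  by rewrite -den_eq ev_s mulf_neq0 // expf_neq0 // mulf_neq0.
have dinv : is_derive y (1 : C) (fun x => (ev x x2 dd)^-1)
    (- (ev y x2 dd) ^- 2 *: ev y x2 (deriv dd)).
  apply: DeriveDef; first by apply: derivableV => //; exact: dden.(ex_derive).
  rewrite deriveV //.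
  by case: dden => _ ->.
have H := is_deriveM dN dinv.
apply: is_derive_eq.
  apply: near_eq_is_derive H; near=> x.
  by rewrite /Fk /num den_eq.
rewrite entry_h1.
have Dd : ev y x2 (deriv dd) =
    2%:R * (y - x2) * (qq.[y] * (y - x2)) ^+ k +
    (y - x2) ^+ 2 * (ev y x2 (deriv sA) * (qq.[y] * (y - x2)) ^+ k.-1 *+ k).
  rewrite /dd derivM !deriv_exp /uA derivXsubC.
  rewrite rmorphD !rmorphM !rmorphMn !rmorphM !rmorphXn ev_s.
  rewrite -/uA ev_u rmorph1 /= expr1 mul1r.
  by rewrite mulr_natl.
rewrite Dd -den_eq ev_s.
rewrite /Fk /num [Bk k.+1]/= map_mxB map_mxD !map_mxZ map_mxM ev_At entry_h2.
rewrite !ev_s ev_u rmorphD !rmorphM ev_C !rmorph_nat.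
rewrite /GRing.scale /=.
exact: alg_step.
Unshelve. all: by end_near. Qed.


Lemma Fk0 E1 E2 x2 y : E1 \in g -> U y ->
  W2 Psi y E1 x2 E2 = Fk E1 (Mop Psi x2 E2) x2 0 y.
Proof.
move=> E1g Uy.
rewrite /W2 /Fk /num /= map_mx1 mulmx1 expr0 mulr1; congr (_ / _).
have Mg := M_in_g E1g Uy.
set M := Mop Psi y E1 in Mg *.
rewrite {1}(coord_vbasis Mg) mulmx_suml linear_sum !mxE /=.
apply: eq_bigr => j _; rewrite -scalemxAl mxtraceZ !mxE mulrC.
by [].
Qed.

Lemma derivn_W E1 E2 x2 k y : E1 \in g -> U y -> y != x2 ->
  derive1n k (fun z => W2 Psi z E1 x2 E2) y = Fk E1 (Mop Psi x2 E2) x2 k y.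
Proof.
move=> E1g; elim: k y => [|k IH] y Uy yx2.
  by rewrite derive1n0; exact: Fk0.
rewrite derive1nS derive1E.
have -> : 'D_1 (derive1n k (fun z => W2 Psi z E1 x2 E2)) y =
          'D_1 (Fk E1 (Mop Psi x2 E2) x2 k) y.
  apply: near_eq_derive; near=> x.
  apply: IH; [exact: (near (U_near Uy) x) | exact: (near (near_neq yx2) x)].
by rewrite (Fk_der (Mop Psi x2 E2) k E1g Uy yx2).(derive_val).
Unshelve. all: by end_near. Qed.


Lemma sA_neq0 : sA != 0.
Proof.
rewrite mulf_neq0 //; first by rewrite /qA map_polyC_eq0 qq_neq0.
by rewrite /uA -size_poly_eq0 size_XsubC.
Qed.

Lemma final E1 E2 : E1 \in g ->
  exists alpha : 'I_((\dim g ^ 2)%N.+1) -> {poly {poly C}},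
    (exists k, alpha k != 0) /\
    forall x1 x2 : C, U x1 -> U x2 -> x1 != x2 ->
      \sum_(k < (\dim g ^ 2)%N.+1)
         peval2 (alpha k) x1 x2 * derive1n k (fun y => W2 Psi y E1 x2 E2) x1
      = 0.
Proof.
move=> E1g.
have dN : (n * n < (n ^ 2).+1)%N by rewrite mulnn ltnS.
have [c [[k0 ck0] Hc]] := dep_idomain (fun k : 'I_((n ^ 2).+1) => mxvec (Bk k)) dN.
have HB : \sum_(k < (n ^ 2).+1) c k *: Bk k = 0.
  have H2 := congr1 vec_mx Hc; rewrite linear0 linear_sum in H2.
  apply: etrans H2; apply: eq_bigr => k _; by rewrite linearZ /= mxvecK.
exists (fun k => c k * sA ^+ k); split.
  by exists k0; rewrite mulf_neq0 // expf_neq0 // sA_neq0.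
move=> x1 x2 Ux1 Ux2 x12.
have q0 : qq.[x1] != 0 by exact/qq_eval/hpole.
have u0 : x1 - x2 != 0 by rewrite subr_eq0.
have S0 : ev x1 x2 sA != 0 by rewrite ev_s mulf_neq0.
transitivity (\sum_(k < (n ^ 2).+1)
   ev x1 x2 (c k) * num E1 (Mop Psi x2 E2) x2 k x1 / (x1 - x2) ^+ 2).
  apply: eq_bigr => k _; rewrite evE derivn_W // /Fk rmorphM rmorphXn.
  field.
  by rewrite u0 expf_neq0.
rewrite -mulr_suml.
suff -> : \sum_(k < (n ^ 2).+1) ev x1 x2 (c k) * num E1 (Mop Psi x2 E2) x2 k x1 = 0
  by rewrite mul0r.
have H3 := congr1 (fun B => (tau (Mop Psi x2 E2) *m map_mx (ev x1 x2) B *m vv E1 x1) 0 0) HB.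
rewrite /= map_mx0 mulmx0 mul0mx in H3.
rewrite [RHS](_ : 0 = (0 : 'M[C]_1) 0 0); last by rewrite mxE.
rewrite -H3.
rewrite map_mx_sum mulmx_sumr mulmx_suml summxE.
apply: eq_bigr => k _; rewrite map_mxZ -scalemxAr -scalemxAl mxE.
by [].
Qed.

End Main.

Unset Implicit Arguments.

Theorem mainTheorem3 (R : realType) (r : nat)
  (G : set 'M[cplx R]_r) (g : {vspace 'M[cplx R]_r})
  (P Q : 'M[{poly cplx R}]_r) (D : cplx R -> 'M[cplx R]_r)
  (U : set (cplx R)) (Psi : cplx R -> 'M[cplx R]_r) :
  matrix_group G -> closed_in_GL G -> lie_algebra_of G g -> reductive_rep G ->
  rational_matrix_fun D P Q ->
  (forall x, pole_free Q x -> D x \in g) ->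
  domain U -> simply_connected U ->
  (forall x, U x -> pole_free Q x) ->
  (forall x, U x -> G (Psi x)) ->
  (forall x, U x -> derivable Psi x 1 /\ derive1 Psi x = D x *m Psi x) ->
  forall E1 E2 : 'M[cplx R]_r, E1 \in g -> E2 \in g ->
  exists alpha : 'I_((\dim g ^ 2)%N.+1) -> {poly {poly cplx R}},
    (exists k, alpha k != 0) /\
    forall x1 x2 : cplx R, U x1 -> U x2 -> x1 != x2 ->
      \sum_(k < (\dim g ^ 2)%N.+1)
         peval2 (alpha k) x1 x2 * derive1n k (fun y => W2 Psi y E1 x2 E2) x1
      = 0.
Proof.
move=> mg _ lieg _ hrat _ hdom _ hpole hG hder E1 E2 E1g _.
exact: (final mg lieg hrat hdom hpole hG hder E2 E1g).
Qed.
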